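(* Let $m\ge 2$, let $\sigma_0\in\{-1,+1\}$, and let $P$ be a real $(m-1)\times(m-1)$ signed permutation matrix. Define the $m\times m$ matrix $$A=\begin{bmatrix} 0_{1\times(m-1)} & \sigma_0\\ P & 0_{(m-1)\times 1}\end{bmatrix}.$$ If all eigenvalues of $A$ are real, then $A = S + E$ where $S$ is a real symmetric matrix and $E$ is a diagonal matrix each of whose diagonal entries belongs to $\{-1,0,+1\}$.
   Context: A real signed permutation matrix is a square matrix with all entries in $\{-1,0,+1\}$ having exactly one nonzero entry in each row and in each column. *)

(* Defs.v *)
(* Real matrices with entries in {-1,0,1} are represented over
   algC (algebraic complex numbers); "real" = Num.real. *)
From HB Require Import structures.
From mathcomp Require Import all_boot all_order all_algebra all_field.
Set Implicit Arguments. Unset Strict Implicit. Unset Printing Implicit Defensive.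
Import Order.TTheory GRing.Theory Num.Theory.
Local Open Scope ring_scope.

Definition sign_entry (x : algC) : Prop := x = -1 \/ x = 0 \/ x = 1.

Definition signed_perm_mx (n : nat) (P : 'M[algC]_n) : Prop :=
  (forall i j, sign_entry (P i j)) /\
  (forall i, #|[set j | P i j != 0]| = 1%N) /\
  (forall j, #|[set i | P i j != 0]| = 1%N).

Definition lemma2_mx (n : nat) (s0 : algC) (P : 'M[algC]_n) : 'M[algC]_(1 + n) :=
  castmx (erefl (1 + n)%N, addnC n 1%N)
    (block_mx (0 : 'M_(1, n)) (s0%:M : 'M_1) P (0 : 'M_(n, 1))).

Definition real_mx (n : nat) (M : 'M[algC]_n) : Prop :=
  forall i j, M i j \is Num.real.

(* Main.v *)
Require Import Defs.
From HB Require Import structures.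
From mathcomp Require Import all_boot all_order all_algebra all_field.
Import Order.TTheory GRing.Theory Num.Theory Num.Def.
Set Implicit Arguments. Unset Strict Implicit. Unset Printing Implicit Defensive.
Local Open Scope ring_scope.

Definition adjm m n (M : 'M[algC]_(m, n)) : 'M[algC]_(n, m) := (map_mx conjC M)^T.

Lemma adjmM m n p (M : 'M[algC]_(m, n)) (N : 'M[algC]_(n, p)) :
  adjm (M *m N) = adjm N *m adjm M.
Proof. by rewrite /adjm map_mxM trmx_mul. Qed.

Lemma adjm_eq0 m n (M : 'M[algC]_(m, n)) : adjm M *m M = 0 -> M = 0.
Proof.
move=> H; apply/matrixP => i j; have := congr1 (fun N : 'M_n => N j j) H.
rewrite !mxE => H1.
have H2 : \sum_l `|M l j| ^+ 2 = 0.
  by rewrite -[RHS]H1; apply: eq_bigr => l _; rewrite normCKC !mxE.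
have := psumr_eq0P (fun l _ => exprn_ge0 2 (normr_ge0 (M l j))) H2 (i := i) isT.
by move/eqP; rewrite expf_eq0 /= normr_eq0 => /eqP ->.
Qed.

Lemma adjmK m n (M : 'M[algC]_(m, n)) : adjm (adjm M) = M.
Proof. by apply/matrixP => i j; rewrite !mxE conjCK. Qed.

Lemma normal_lem k (Q Y : 'M[algC]_k) :
  adjm Q *m Q = Q *m adjm Q -> Q *m (Q *m Y) = 0 -> Q *m Y = 0.
Proof.
move=> HN H.
have H1 : adjm Q *m (Q *m Y) = 0.
  apply: adjm_eq0.
  rewrite !adjmM adjmK !mulmxA -(mulmxA (adjm Y *m adjm Q) Q) -HN !mulmxA.
  by rewrite -!mulmxA H !mulmx0.
apply: adjm_eq0; by rewrite adjmM -mulmxA H1 mulmx0.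
Qed.

Lemma sign_conj x : sign_entry x -> x^* = x.
Proof. by case=> [->|[->|->]]; rewrite ?conjC1 ?conjC0 ?conjCN1. Qed.

Lemma sign_sq x : sign_entry x -> x != 0 -> x * x = 1.
Proof. by case=> [->|[->|->]]; rewrite ?eqxx // ?mulrNN mulr1. Qed.

Lemma spm_adj k (P : 'M[algC]_k) : signed_perm_mx P -> map_mx conjC P = P.
Proof. by case=> hs _; apply/matrixP => i j; rewrite mxE sign_conj. Qed.

Lemma spm_tr k (P : 'M[algC]_k) : signed_perm_mx P -> P^T *m P = 1%:M.
Proof.
case=> hs [hr hc]; apply/matrixP => i j; rewrite !mxE.
have /eqP/cards1P [l0 Hl0] := hc i.
have Hl0i : P l0 i != 0 by have := set11 l0; rewrite -Hl0 inE.
have Hz : forall l, l != l0 -> P l i = 0.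
  move=> l hl; apply/eqP; apply: contraNT hl => hne.
  have : l \in [set i0 | P i0 i != 0] by rewrite inE.
  by rewrite Hl0 inE.
rewrite (bigD1 l0) //= big1 => [|l hl]; last by rewrite mxE Hz ?mul0r.
rewrite mxE.
rewrite addr0; case: (eqVneq i j) => [<-|hij].
  by rewrite sign_sq.
have /eqP/cards1P [j0 Hj0] := hr l0.
have Hi : i \in [set j1 | P l0 j1 != 0] by rewrite inE.
have Hj : P l0 j = 0.
  apply/eqP; apply: contraNT hij => hne.
  have : j \in [set j1 | P l0 j1 != 0] by rewrite inE.
  by move: Hi; rewrite Hj0 !inE => /eqP -> /eqP ->.
by rewrite Hj mulr0.
Qed.

Lemma castmx_mulmx k m (e : k = m) p (C : 'M[algC]_(k, p)) (B : 'M[algC]_(p, k)) :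
  castmx (e, erefl p) C *m castmx (erefl p, e) B = castmx (e, e) (C *m B).
Proof. by case: m / e; rewrite !castmx_id. Qed.

Lemma castmx_1 k m (e : k = m) : castmx (e, e) (1%:M : 'M[algC]_k) = 1%:M.
Proof. by case: m / e; rewrite castmx_id. Qed.

Lemma A_conj n (s0 : algC) (P : 'M[algC]_n) : (s0 = 1 \/ s0 = -1) ->
  signed_perm_mx P -> map_mx conjC (lemma2_mx s0 P) = lemma2_mx s0 P.
Proof.
move=> hs hP; rewrite /lemma2_mx map_castmx map_block_mx !map_mx0 (spm_adj hP).
have hse : sign_entry s0 by case: hs; [right; right | left].
have -> : map_mx conjC (s0%:M : 'M_1) = s0%:M.
  by apply/matrixP=> i j; rewrite !mxE; case: (i == j); rewrite ?mulr1n ?mulr0n ?conjC0 ?sign_conj.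
by [].
Qed.

Lemma A_tr n (s0 : algC) (P : 'M[algC]_n) : (s0 = 1 \/ s0 = -1) ->
  signed_perm_mx P -> (lemma2_mx s0 P)^T *m lemma2_mx s0 P = 1%:M.
Proof.
move=> hs hP; rewrite /lemma2_mx trmx_cast /= castmx_mulmx.
rewrite tr_block_mx mulmx_block !trmx0 !mul0mx !mulmx0 !add0r !addr0 spm_tr //.
rewrite tr_scalar_mx mul_scalar_mx scale_scalar_mx.
have -> : s0 * s0 = 1 by case: hs => ->; rewrite ?mulrNN mulr1.
rewrite -(castmx_1 (addnC n 1%N)); congr castmx; symmetry; exact: scalar_mx_block.
Qed.

Lemma adjmZ m n (a : algC) (M : 'M[algC]_(m, n)) : adjm (a *: M) = a^* *: adjm M.
Proof. by apply/matrixP => i j; rewrite !mxE rmorphM. Qed.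

Lemma adjmB n (M : 'M[algC]_n) (c : algC) : c^* = c -> adjm (M - c%:M) = adjm M - c%:M.
Proof.
move=> hc; apply/matrixP => i j; rewrite !mxE rmorphB /=; congr (_ - _).
by rewrite eq_sym; case: (i == j); rewrite ?mulr1n ?mulr0n ?conjC0 ?hc.
Qed.

Lemma normal_shift n (A : 'M[algC]_n) (c : algC) : c^* = c ->
  adjm A *m A = 1%:M -> A *m adjm A = 1%:M ->
  adjm (A - c%:M) *m (A - c%:M) = (A - c%:M) *m adjm (A - c%:M).
Proof.
move=> hc h1 h2; rewrite adjmB //.
rewrite !mulmxBl !mulmxBr h1 h2 !mul_mx_scalar !mul_scalar_mx.
by rewrite !opprB !addrA addrAC [RHS]addrAC; congr (_ + _); exact: addrAC.
Qed.

Theorem lemma2 (n : nat) (hn : (1 <= n)%N) (s0 : algC) (P : 'M[algC]_n)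
  (hs0 : s0 = 1 \/ s0 = -1) (hP : signed_perm_mx P)
  (hreal : forall z : algC, eigenvalue (lemma2_mx s0 P) z -> z \is Num.real) :
  exists S E : 'M[algC]_(1 + n),
    [/\ real_mx S, S^T = S, is_diag_mx E,
        (forall i, sign_entry (E i i)) & lemma2_mx s0 P = S + E].
Proof.
have hc : map_mx conjC (lemma2_mx s0 P) = lemma2_mx s0 P := A_conj hs0 hP.
have h1 : adjm (lemma2_mx s0 P) *m lemma2_mx s0 P = 1%:M by rewrite /adjm hc A_tr.
have h2 : lemma2_mx s0 P *m adjm (lemma2_mx s0 P) = 1%:M by apply: mulmx1C.
have heig : forall z, eigenvalue (lemma2_mx s0 P) z -> z = 1 \/ z = -1.
  move=> z hz; have zr := hreal z hz.
  move/eigenvalueP: hz => [v hv vn0].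
  have e1 : v *m adjm v = (z * z^*) *: (v *m adjm v).
    have e0 : v *m lemma2_mx s0 P *m adjm (v *m lemma2_mx s0 P) = v *m adjm v.
      by rewrite adjmM -mulmxA (mulmxA (lemma2_mx s0 P)) h2 mul1mx.
    rewrite hv adjmZ -scalemxAl -scalemxAr scalerA in e0.
    by rewrite e0.
  have e2 : (1 - z * z^*) *: (v *m adjm v) = 0.
    by rewrite scalerBl scale1r -e1 subrr.
  move/eqP: e2; rewrite scaler_eq0 => /orP [|].
    rewrite subr_eq0 => /eqP e3.
    move: zr; rewrite CrealE => /eqP hzc; rewrite hzc in e3.
    have : z ^+ 2 == 1 by rewrite expr2 -e3.
    by rewrite sqrf_eq1 => /orP [/eqP -> | /eqP ->]; [left | right].
  move=> /eqP e4; exfalso; move: vn0; rewrite -(adjmK v).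
  have -> : adjm v = 0 by apply: adjm_eq0; rewrite adjmK.
  by apply/negP; rewrite negbK; apply/eqP/matrixP => i j; rewrite !mxE conjC0.
have [r hr] := closed_field_poly_normal (char_poly (lemma2_mx s0 P)).
rewrite (monicP (char_poly_monic _)) scale1r in hr.
have hroots : forall z, z \in r -> z = 1 \/ z = -1.
  by move=> z zr; apply: heig; rewrite eigenvalue_root_char hr root_prod_XsubC.
pose h := horner_mx (lemma2_mx s0 P : 'M[algC]_n.+1).
have hmul : forall p q (X : 'M[algC]_n.+1), h (p * q) * X = h p * (h q * X).
  by move=> p q X; rewrite /h rmorphM mulrA.
have hX : forall c, h ('X - c%:P) = lemma2_mx s0 P - c%:M.
  by move=> c; rewrite /h rmorphB /= horner_mx_X horner_mx_C.
have hnorm : forall c, (c = 1 \/ c = -1) -> forall Y : 'M[algC]_n.+1,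
    h ('X - c%:P) * (h ('X - c%:P) * Y) = 0 -> h ('X - c%:P) * Y = 0.
  move=> c hc' Y; rewrite hX; apply: normal_lem; apply: normal_shift => //.
  by case: hc' => ->; rewrite ?conjC1 ?conjCN1.
pose p1 : {poly algC} := 'X - 1%:P.
pose p2 : {poly algC} := 'X - (-1)%:P.
have key : forall s, (forall z, z \in s -> z = 1 \/ z = -1) ->
    forall X : 'M[algC]_n.+1,
    h (\prod_(z <- s) ('X - z%:P)) * X = 0 -> h (p1 * p2) * X = 0.
  elim=> [|z s IH] hs X.
    by rewrite big_nil /h rmorph1 mul1r => ->; rewrite mulr0.
  have hs' : forall y, y \in s -> y = 1 \/ y = -1.
    by move=> y hy; apply: hs; rewrite inE hy orbT.
  rewrite big_cons mulrC hmul => H0; have H := IH hs' _ H0.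
  case: (hs z (mem_head z s)) => ez; rewrite ez in H.
    have H' : h p1 * (h p1 * (h p2 * X)) = 0.
      by rewrite -!hmul (mulrAC p1 p1 p2) hmul.
    by rewrite hmul; apply: (hnorm 1) => //; left.
  have H' : h p2 * (h p2 * (h p1 * X)) = 0.
    have eqp : p2 * p2 * p1 = (p1 * p2) * p2 by rewrite mulrC mulrA.
    by rewrite -!hmul eqp hmul.
  by rewrite (mulrC p1 p2) hmul; apply: (hnorm (-1)) => //; right.
have CH := Cayley_Hamilton (lemma2_mx s0 P : 'M[algC]_n.+1).
rewrite hr in CH.
have hR := key r hroots 1; rewrite !mulr1 in hR; have {}hR := hR CH.
have ep : p1 * p2 = 'X ^+ 2 - 1 by rewrite /p1 /p2 polyCN opprK -subr_sqr expr1n.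
rewrite ep /h rmorphB rmorphXn /= horner_mx_X rmorph1 in hR.
move/eqP: hR; rewrite subr_eq0 => /eqP hA2.
have hsym : (lemma2_mx s0 P)^T = lemma2_mx s0 P.
  have -> : (lemma2_mx s0 P)^T = adjm (lemma2_mx s0 P) by rewrite /adjm hc.
  rewrite -[X in X = _]mulr1 -hA2 expr2 mulrA -!mulmxE h1 mul1mx //.
exists (lemma2_mx s0 P), 0; split => //.
- move=> i j; rewrite CrealE; apply/eqP.
  by have := congr1 (fun M : 'M_(1 + n) => M i j) hc; rewrite /= mxE.
- exact: mx0_is_diag.
- by move=> i; rewrite mxE; right; left.
- by rewrite addr0.
Qed.
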